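(* Let $\rho_{AB}$ be positive semidefinite on $\mathcal{H}_A\otimes\mathcal{H}_B$ with $0<\operatorname{tr}\rho_{AB}\le1$. Then $$\hat H_{\min}(A|B)_\rho\le H_{\min}(A|B)_\rho-\log\frac{1}{\operatorname{tr}\rho_{AB}}.$$
   Context: Hilbert spaces are finite-dimensional; $\log$ is binary. $D_{\max}(\rho\|\tau)=\inf\{\lambda\in\mathbb{R}:\rho\le2^\lambda\tau\}$. $H_{\min}(A|B)_\rho=\max_{\sigma_B}-D_{\max}(\rho_{AB}\|\mathbb{1}_A\otimes\sigma_B)$, max over normalized density operators $\sigma_B$; $\hat H_{\min}(A|B)_\rho=-D_{\max}(\rho_{AB}\|\mathbb{1}_A\otimes\rho_B)$ with $\rho_B=\operatorname{tr}_A\rho_{AB}$. *)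

(* Defs.v *)
From HB Require Import structures.
From mathcomp Require Import all_boot all_order all_algebra.
From mathcomp Require Import complex mxtens.
From mathcomp Require Import classical_sets reals ereal exp.
Set Implicit Arguments. Unset Strict Implicit. Unset Printing Implicit Defensive.
Import Order.TTheory GRing.Theory Num.Theory.
Local Open Scope ring_scope.

Section Quantum.
Variable R : realType.
Local Notation C := (R[i]).

Definition cR (x : R) : C := (x%:C)%C.

Definition adjmx m n (A : 'M[C]_(m, n)) : 'M[C]_(n, m) :=
  \matrix_(i, j) ((A j i)^*)%C.

Definition psd n (A : 'M[C]_n) : Prop :=
  adjmx A = A /\ forall v : 'cV[C]_n, 0 <= (adjmx v *m A *m v) 0 0.

Definition loewner n (A B : 'M[C]_n) : Prop := psd (B - A).

Definition density n (s : 'M[C]_n) : Prop := psd s /\ \tr s = 1.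

Definition ptraceA dA dB (rho : 'M[C]_(dA * dB)) : 'M[C]_dB :=
  \matrix_(i, j) \sum_(k < dA) rho (mxtens_index (k, i)) (mxtens_index (k, j)).

Definition log2 (x : R) : R := ln x / ln 2.

(* D_max(rho||tau) = inf { lambda in R : rho <= 2^lambda tau }  (in \bar R,
   +oo when the set is empty) *)
Definition Dmax n (rho tau : 'M[C]_n) : \bar R :=
  ereal_inf [set (lam%:E)%E | lam in [set lam : R | loewner rho (cR (2 `^ lam) *: tau)]]%classic.

Definition Hmin dA dB (rho : 'M[C]_(dA * dB)) : \bar R :=
  ereal_sup [set (- Dmax rho (1%:M *t sigma))%E | sigma in [set sigma : 'M[C]_dB | density sigma]]%classic.

Definition Hmin_hat dA dB (rho : 'M[C]_(dA * dB)) : \bar R :=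
  (- Dmax rho (1%:M *t ptraceA rho))%E.

End Quantum.

(* Main.v *)
Require Import Defs.
From HB Require Import structures.
From mathcomp Require Import all_boot all_order all_algebra.
From mathcomp Require Import complex mxtens.
From mathcomp Require Import classical_sets reals ereal exp.
Import Order.TTheory GRing.Theory Num.Theory.
Local Open Scope ring_scope.
Local Open Scope complex_scope.

Section L.
Variable R : realType.
Local Notation C := (R[i]).

Lemma quadE n (A : 'M[C]_n) (v : 'cV[C]_n) :
  (adjmx v *m A *m v) 0 0 = \sum_i \sum_j (v i 0)^* * A i j * v j 0.
Proof.
rewrite mxE; under eq_bigr do rewrite mxE mulr_suml.
rewrite exchange_big; apply: eq_bigr => i _; apply: eq_bigr => j _.
by rewrite !mxE.
Qed.

Lemma sum_tens m n (F : 'I_(m * n) -> C) :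
  \sum_i F i = \sum_(a < m) \sum_(b < n) F (mxtens_index (a, b)).
Proof.
rewrite pair_big /=.
rewrite (reindex (@mxtens_index m n)) /=.
  by apply: eq_bigr => -[a b].
by exists (@mxtens_unindex m n) => x _; [rewrite mxtens_indexK | rewrite mxtens_unindexK].
Qed.

Lemma psd_diag n (A : 'M[C]_n) i : psd A -> 0 <= A i i.
Proof.
move=> [_ /(_ (delta_mx i 0))].
have -> : adjmx (delta_mx i 0 : 'cV[C]_n) = delta_mx 0 i.
  apply/matrixP => a b; rewrite !mxE.
  by rewrite conjc_nat andbC.
by rewrite -(rowE i A) -colE !mxE.
Qed.

Lemma psd_tr n (A : 'M[C]_n) : psd A -> \tr A = (complex.Re (\tr A))%:C.
Proof.
move=> pA; have: 0 <= \tr A by rewrite /mxtrace; apply: sumr_ge0 => i _; exact: psd_diag.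
move/ger0_Im; case: (\tr A) => a b /= -> //.
Qed.


Lemma sum_if m (k : 'I_m) (F : 'I_m -> C) :
  \sum_a (if a == k then F a else 0) = F k.
Proof. by rewrite -big_mkcond big_pred1_eq. Qed.

Lemma ptrace_herm dA dB (rho : 'M[C]_(dA * dB)) :
  adjmx rho = rho -> adjmx (ptraceA rho) = ptraceA rho.
Proof.
move=> h; apply/matrixP => i j; rewrite !mxE rmorph_sum; apply: eq_bigr => k _.
have := congr1 (fun M : 'M[C]_(dA * dB) => M (mxtens_index (k, i)) (mxtens_index (k, j))) h.
by rewrite /= mxE => <-.
Qed.

Lemma ptrace_tr dA dB (rho : 'M[C]_(dA * dB)) : \tr (ptraceA rho) = \tr rho.
Proof.
rewrite /mxtrace sum_tens; under eq_bigr do rewrite mxE.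
by rewrite exchange_big.
Qed.

Lemma ptrace_psd dA dB (rho : 'M[C]_(dA * dB)) : psd rho -> psd (ptraceA rho).
Proof.
move=> [h q]; split; first exact: ptrace_herm.
move=> v; rewrite quadE.
pose w (k : 'I_dA) : 'cV[C]_(dA * dB) :=
  \col_x (if (mxtens_unindex x).1 == k then v (mxtens_unindex x).2 0 else 0).
have E : forall k, (adjmx (w k) *m rho *m w k) 0 0 =
   \sum_j \sum_l (v j 0)^* * rho (mxtens_index (k, j)) (mxtens_index (k, l)) * v l 0.
  move=> k; rewrite quadE sum_tens.
  under eq_bigr => a _.
    under eq_bigr => b _.
      rewrite sum_tens.
      under eq_bigr => c _ do under eq_bigr => d _ do rewrite !mxE !mxtens_indexK /=.
      over.
    over.
  rewrite (bigD1 k) // /= [X in _ + X]big1 ?addr0; last first.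
    move=> a ak; have {}ak : (a == k) = false by exact: negbTE.
    apply: big1 => b _; apply: big1 => c _; apply: big1 => d _.
    by rewrite ak raddf0 !mul0r.
  rewrite eqxx; apply: eq_bigr => b _.
  rewrite (bigD1 k) // /= [X in _ + X]big1 ?addr0; last first.
    move=> c ck; have {}ck : (c == k) = false by exact: negbTE.
    by apply: big1 => d _; rewrite ck mulr0.
  by rewrite eqxx.
have -> : \sum_i \sum_j (v i 0)^* * ptraceA rho i j * v j 0 =
   \sum_k (adjmx (w k) *m rho *m w k) 0 0.
  under [RHS]eq_bigr do rewrite E.
  rewrite [RHS]exchange_big; apply: eq_bigr => j _.
  rewrite [RHS]exchange_big; apply: eq_bigr => l _.
  by rewrite mxE mulr_sumr mulr_suml.
by apply: sumr_ge0 => k _; apply: q.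
Qed.

Lemma conjcRM (c : R) (z : C) : (cR c * z)^* = cR c * z^*.
Proof. by rewrite rmorphM; congr (_ * _); exact: conjc_real. Qed.

Lemma psd_scale n (c : R) (M : 'M[C]_n) : 0 <= c -> psd M -> psd (cR c *: M).
Proof.
move=> c0 [h q]; split.
  apply/matrixP => i j; rewrite !mxE conjcRM.
  congr (_ * _).
  by have := congr1 (fun M : 'M[C]_n => M i j) h; rewrite /= mxE.
move=> v; rewrite -scalemxAr -scalemxAl mxE; apply: mulr_ge0 => //.
by rewrite /cR ler0c.
Qed.

Lemma tens_scale dA dB (c : C) (M : 'M[C]_dB) :
  (1%:M : 'M[C]_dA) *t (c *: M) = c *: ((1%:M : 'M[C]_dA) *t M).
Proof.
apply/matrixP => i j; case: (mxtens_indexP i) => a b; case: (mxtens_indexP j) => a' b'.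
by rewrite !mxE !mxtens_indexK /= mulrCA.
Qed.

Lemma cRM (x y : R) : cR x * cR y = cR (x * y).
Proof. by rewrite /cR -rmorphM. Qed.

End L.

Theorem lemma14 (R : realType) (dA dB : nat) (rho : 'M[R[i]]_(dA * dB)) :
  psd rho ->
  0 < complex.Re (\tr rho) -> complex.Re (\tr rho) <= 1 ->
  (Hmin_hat rho <= Hmin rho - (log2 (1 / complex.Re (\tr rho)))%:E)%E.
Proof.
move=> prho t0 t1.
set t := complex.Re (\tr rho).
set rB := ptraceA rho.
pose sig := cR (t^-1) *: rB.
have trr : \tr rho = cR t by rewrite /cR [LHS]psd_tr.
have dens : density sig.
  split; first by apply: psd_scale; [rewrite invr_ge0 ltW | exact: ptrace_psd].
  by rewrite mxtraceZ ptrace_tr trr cRM mulVf ?gt_eqF // /cR.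
pose l := log2 t.
have pow2l : 2 `^ l = t.
  rewrite /powR ifN ?pnatr_eq0 // /l /log2 mulfVK; first by rewrite lnK // posrE.
  by rewrite gt_eqF // ln_gt0 // ltr1n.
have key : forall lam, loewner rho (cR (2 `^ lam) *: ((1%:M : 'M_dA) *t rB)) ->
    loewner rho (cR (2 `^ (lam + l)) *: ((1%:M : 'M_dA) *t sig)).
  move=> lam; congr loewner; rewrite tens_scale scalerA cRM powRD; last first.
    by apply/implyP => _; rewrite pnatr_eq0.
  by rewrite pow2l -mulrA mulfV ?gt_eqF // mulr1.
have H1 : (Dmax rho ((1%:M : 'M_dA) *t sig) - l%:E <= Dmax rho ((1%:M : 'M_dA) *t rB))%E.
  apply/ereal_infP => y [lam Slam <-].
  rewrite leeBlDr; last by [].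
  apply: ge_ereal_inf; exists (lam + l)%:E; last by rewrite EFinD.
  exists (lam + l); last by [].
  exact: key.
have H2 : (- Dmax rho ((1%:M : 'M_dA) *t sig) <= Hmin rho)%E.
  apply: le_ereal_sup_tmp; exists (- Dmax rho ((1%:M : 'M_dA) *t sig))%E; last exact: lexx.
  exists sig; [exact: dens | reflexivity].
have -> : log2 (1 / t) = - l by rewrite /l /log2 div1r lnV ?posrE // mulNr.
rewrite EFinN oppeK.
apply: (@le_trans _ _ (- Dmax rho ((1%:M : 'M_dA) *t sig) + l%:E)%E).
  rewrite /Hmin_hat -fin_num_oppeB; last by [].
  rewrite leeN2; exact: H1.
exact: leeD2r.
Qed.
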